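(* Every left synchronous relation and every right synchronous relation over $\Sigma$ is realized by some transducer that is zero-avoiding with bound $0$. Moreover, both inclusions are proper: there is a relation realized by a transducer that is zero-avoiding with bound $0$ (for instance $(00/0)^*=\{0^{2i}/0^i : i\in\mathbb N_0\}$) which is neither left synchronous nor right synchronous.
   Context: A transducer is a quintuple $\mathcal T=(Q,\Sigma,E,I,F)$ with finite state set $Q$, finite alphabet $\Sigma$, finite transition set $E\subseteq Q\times\{x/y : x,y\in\Sigma\cup\{\lambda\}\}\times Q$ ($\lambda$ the empty word), nonempty initial set $I\subseteq Q$, final set $F\subseteq Q$. Paths, labels (concatenation of input parts / output parts), computations (empty or starting at an initial state) and accepting computations (empty with $I\cap F\neq\emptyset$, or nonempty ending at a final state) are as usual; $R(\mathcal T)$ is the set of labels of accepting computations. For a path $P$ with label $u/v$, $d(P)=|u|-|v|$, and $d_{max}(P)=\max\{|d(Q)| : Q\text{ a prefix of }P\}$. $\mathcal T$ is zero-avoiding with bound $k$ if for every computation $P$, $d_{max}(P)>k$ implies $d(P)\neq0$. A transducer is letter-to-letter if all its labels are $\sigma/\tau$ with $\sigma,\tau\in\Sigma$. The product of relations is $R_1R_2=\{u_1u_2/v_1v_2 : u_1/v_1\in R_1,\ u_2/v_2\in R_2\}$. A relation $R\subseteq\Sigma^*\times\Sigma^*$ is left synchronous if it is a finite union of relations each of the form $S(A\times\{\lambda\})$ or $S(\{\lambda\}\times A)$, where $A\subseteq\Sigma^*$ is regular and $S$ is realized by a letter-to-letter transducer; it is right synchronous if it is a finite union of relations each of the form $(A\times\{\lambda\})S$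 or $(\{\lambda\}\times A)S$ with $A,S$ as before. *)

(* Defs.v *)
From HB Require Import structures.
From mathcomp Require Import all_boot all_order all_algebra.
Set Implicit Arguments. Unset Strict Implicit. Unset Printing Implicit Defensive.
Import Order.TTheory GRing.Theory Num.Theory.

Definition wrel (Sigma : finType) := seq Sigma -> seq Sigma -> Prop.

(* A label x/y with x,y in Sigma ∪ {λ}
   is encoded as a pair of options (None = λ).  E is a (automatically finite)
   boolean predicate on Q × (Sigma∪{λ}) × (Sigma∪{λ}) × Q. *)
Record transducer (Sigma : finType) := Transducer {
  tstate : finType;
  tedge : tstate -> option Sigma -> option Sigma -> tstate -> bool;
  tinit : tstate -> bool;
  tfinal : tstate -> bool;
  tinit_ne : exists q, tinit q
}.

Section Transducers.
Variable Sigma : finType.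
Variable T : transducer Sigma.
Local Notation Q := (tstate T).

(* A path is a start state together with a sequence of steps
   (input part, output part, target state). *)
Definition step := (option Sigma * option Sigma * Q)%type.

Fixpoint is_path (p : Q) (s : seq step) : bool :=
  match s with
  | [::] => true
  | (x, y, q) :: s' => tedge p x y q && is_path q s'
  end.

Definition ow (o : option Sigma) : seq Sigma :=
  if o is Some a then [:: a] else [::].

Definition in_label (s : seq step) : seq Sigma :=
  flatten [seq ow st.1.1 | st <- s].
Definition out_label (s : seq step) : seq Sigma :=
  flatten [seq ow st.1.2 | st <- s].

Definition end_state (p : Q) (s : seq step) : Q := last p [seq st.2 | st <- s].

Definition dlen (s : seq step) : int :=
  ((size (in_label s))%:Z - (size (out_label s))%:Z)%R.

Definition dmax (s : seq step) : nat :=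
  \max_(i < (size s).+1) `|dlen (take i s)|%N.

Definition computation (p : Q) (s : seq step) : Prop :=
  is_path p s /\ tinit p.

Definition accepting (p : Q) (s : seq step) : Prop :=
  computation p s /\
  ((s = [::] /\ tfinal p) \/ (s <> [::] /\ tfinal (end_state p s))).

Definition relT : wrel Sigma := fun u v =>
  exists p s, accepting p s /\ in_label s = u /\ out_label s = v.

Definition zero_avoiding (k : nat) : Prop :=
  forall p s, computation p s -> (k < dmax s)%N -> dlen s <> 0%R.

Definition letter_to_letter : Prop :=
  forall (p q : Q) (x y : option Sigma), tedge p x y q -> x != None /\ y != None.

End Transducers.

Definition realizes (Sigma : finType) (T : transducer Sigma) (R : wrel Sigma) :=
  forall u v, R u v <-> relT T u v.

Record dfa (Sigma : finType) := DFA {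
  dstate : finType;
  dstart : dstate;
  dtrans : dstate -> Sigma -> dstate;
  dfinal : dstate -> bool
}.

Definition dfa_accepts (Sigma : finType) (M : dfa Sigma) (w : seq Sigma) : bool :=
  @dfinal _ M (foldl (@dtrans _ M) (dstart M) w).

Definition regular (Sigma : finType) (A : seq Sigma -> Prop) : Prop :=
  exists M : dfa Sigma, forall w, A w <-> dfa_accepts M w.

Definition rel_prod (Sigma : finType) (R1 R2 : wrel Sigma) : wrel Sigma :=
  fun u v => exists u1 u2 v1 v2,
    u = u1 ++ u2 /\ v = v1 ++ v2 /\ R1 u1 v1 /\ R2 u2 v2.

Definition left_only (Sigma : finType) (A : seq Sigma -> Prop) : wrel Sigma :=
  fun u v => A u /\ v = [::].
Definition right_only (Sigma : finType) (A : seq Sigma -> Prop) : wrel Sigma :=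
  fun u v => u = [::] /\ A v.

Definition l2l_rel (Sigma : finType) (S : wrel Sigma) : Prop :=
  exists T : transducer Sigma, letter_to_letter T /\ realizes T S.

Definition rel_eq (Sigma : finType) (R1 R2 : wrel Sigma) : Prop :=
  forall u v, R1 u v <-> R2 u v.

Definition left_sync_piece (Sigma : finType) (R : wrel Sigma) : Prop :=
  exists (S : wrel Sigma) (A : seq Sigma -> Prop),
    l2l_rel S /\ regular A /\
    (rel_eq R (rel_prod S (left_only A)) \/ rel_eq R (rel_prod S (right_only A))).

Definition right_sync_piece (Sigma : finType) (R : wrel Sigma) : Prop :=
  exists (S : wrel Sigma) (A : seq Sigma -> Prop),
    l2l_rel S /\ regular A /\
    (rel_eq R (rel_prod (left_only A) S) \/ rel_eq R (rel_prod (right_only A) S)).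

Definition left_synchronous (Sigma : finType) (R : wrel Sigma) : Prop :=
  exists (n : nat) (Rs : 'I_n -> wrel Sigma),
    (forall i, left_sync_piece (Rs i)) /\
    forall u v, R u v <-> exists i, Rs i u v.

Definition right_synchronous (Sigma : finType) (R : wrel Sigma) : Prop :=
  exists (n : nat) (Rs : 'I_n -> wrel Sigma),
    (forall i, right_sync_piece (Rs i)) /\
    forall u v, R u v <-> exists i, Rs i u v.

Definition double_rel (Sigma : finType) (a : Sigma) : wrel Sigma :=
  fun u v => exists i : nat, u = nseq (2 * i) a /\ v = nseq i a.

(* Main.v *)
Require Import Defs.
From HB Require Import structures.
From mathcomp Require Import all_boot all_order all_algebra.
From mathcomp Require Import zify.
From Stdlib Require Import ClassicalEpsilon.
Set Implicit Arguments. Unset Strict Implicit. Unset Printing Implicit Defensive.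
Import Order.TTheory GRing.Theory Num.Theory.

Section Basic.
Variable Sigma : finType.
Variable T : transducer Sigma.
Local Notation Q := (tstate T).
Implicit Types (p q : Q) (s : seq (step T)).

Lemma in_label_cons (st : step T) s : in_label (st :: s) = ow st.1.1 ++ in_label s.
Proof. by []. Qed.
Lemma out_label_cons (st : step T) s : out_label (st :: s) = ow st.1.2 ++ out_label s.
Proof. by []. Qed.
Lemma in_label_cat s1 s2 : in_label (s1 ++ s2) = in_label s1 ++ in_label s2.
Proof. by rewrite /in_label map_cat flatten_cat. Qed.
Lemma out_label_cat s1 s2 : out_label (s1 ++ s2) = out_label s1 ++ out_label s2.
Proof. by rewrite /out_label map_cat flatten_cat. Qed.

Lemma is_path_cat p s1 s2 :
  is_path p (s1 ++ s2) = is_path p s1 && is_path (end_state p s1) s2.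
Proof.
elim: s1 p => [|[[x y] q] s1 IH] p //=.
by rewrite IH andbA.
Qed.

Lemma end_state_cons p x y q s : end_state p ((x, y, q) :: s) = end_state q s.
Proof. by []. Qed.

Lemma end_state_cat p s1 s2 : end_state p (s1 ++ s2) = end_state (end_state p s1) s2.
Proof. by rewrite /end_state map_cat last_cat. Qed.

Lemma acceptingE p s :
  accepting p s <-> [/\ is_path p s, tinit p & tfinal (end_state p s)].
Proof.
split.
- case=> [[Hp Hi]] [[Hs Hf]|[_ Hf]]; split=> //; by rewrite Hs.
- case=> Hp Hi Hf; split; first by [].
  case: s Hp Hf => [|st s] Hp Hf; [left|right]; by split.
Qed.

Lemma relTE u v : relT T u v <->
  exists p s, [/\ is_path p s, tinit p, tfinal (end_state p s),
                  in_label s = u & out_label s = v].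
Proof.
split.
- case=> p [s [/acceptingE [H1 H2 H3] [H4 H5]]]; by exists p, s.
- case=> p [s [H1 H2 H3 H4 H5]]; exists p, s; split=> //; exact/acceptingE.
Qed.

Definition stepok (b : bool) (st : step T) :=
  if b then size (ow st.1.2) <= size (ow st.1.1)
  else size (ow st.1.1) <= size (ow st.1.2).

Definition good := exists sg : Q -> bool,
  forall p x y q, tedge p x y q ->
    sg q = sg p /\ stepok (sg p) (x, y, q).

Lemma good_all sg :
  (forall p x y q, tedge p x y q -> sg q = sg p /\ stepok (sg p) (x, y, q)) ->
  forall p s, is_path p s -> all (stepok (sg p)) s.
Proof.
move=> H p s; elim: s p => [|[[x y] q] s IH] p //= /andP [He Hs].
have [E1 E2] := H _ _ _ _ He.
by rewrite E2 /= -E1 IH.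
Qed.

Lemma all_sizes b s : all (stepok b) s ->
  if b then size (out_label s) <= size (in_label s)
  else size (in_label s) <= size (out_label s).
Proof.
elim: s => [|st s IH]; first by case: b.
rewrite /= in_label_cons out_label_cons !size_cat => /andP [H1 H2].
move: (IH H2) H1; rewrite /stepok; case: (b) => /=; lia.
Qed.

Lemma dmax0 s : (forall i, `|dlen (take i s)|%N = 0) -> dmax s = 0.
Proof.
move=> H; rewrite /dmax; apply: big1 => i _; exact: H.
Qed.

Lemma good_za : good -> zero_avoiding T 0.
Proof.
case=> sg H p s [Hp _] Hmax Hd.
have Hall := good_all H Hp.
suff: dmax s = 0 by move=> E; rewrite E in Hmax.
apply: dmax0 => i.
have E : size (in_label s) = size (out_label s).
  move: Hd; rewrite /dlen => /eqP; rewrite subr_eq0 => /eqP [] //.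
rewrite -(cat_take_drop i s) all_cat in Hall.
case/andP: Hall => H1 H2.
have A1 := all_sizes H1; have A2 := all_sizes H2.
move: E; rewrite -{1 2}(cat_take_drop i s) in_label_cat out_label_cat !size_cat => E.
rewrite /dlen.
have E2 : size (in_label (take i s)) = size (out_label (take i s)).
  by move: A1 A2; case: (sg p); lia.
by rewrite E2 subrr.
Qed.

End Basic.

Section Morph.
Variable Sigma : finType.
Variables T1 T2 : transducer Sigma.
Variable f : tstate T1 -> tstate T2.

Definition mstep (st : step T1) : step T2 := (st.1.1, st.1.2, f st.2).

Lemma in_label_map s : in_label (map mstep s) = in_label s.
Proof. by elim: s => //= st s IH; rewrite !in_label_cons IH. Qed.
Lemma out_label_map s : out_label (map mstep s) = out_label s.
Proof. by elim: s => //= st s IH; rewrite !out_label_cons IH. Qed.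
Lemma end_state_map p s : end_state (f p) (map mstep s) = f (end_state p s).
Proof. by elim: s p => [|[[x y] q] s IH] p //=; rewrite !end_state_cons IH. Qed.

Hypothesis Hf : forall p x y q, tedge p x y q -> tedge (f p) x y (f q).

Lemma is_path_map p s : is_path p s -> is_path (f p) (map mstep s).
Proof.
elim: s p => [|[[x y] q] s IH] p //= /andP [H1 H2].
by rewrite Hf // IH.
Qed.

Lemma relT_map : (forall p, tinit p -> tinit (f p)) -> (forall p, tfinal p -> tfinal (f p)) ->
  forall u v, relT T1 u v -> relT T2 u v.
Proof.
move=> Hi Hfi u v /relTE [p [s [H1 H2 H3 H4 H5]]].
apply/relTE; exists (f p), (map mstep s); split.
- exact: is_path_map.
- exact: Hi.
- by rewrite end_state_map; apply: Hfi.
- by rewrite in_label_map.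
- by rewrite out_label_map.
Qed.
End Morph.

Section Sum.
Variable Sigma : finType.
Variables (T1 T2 : transducer Sigma) (c : bool).
Definition Q12 : finType := (tstate T1 + tstate T2)%type.

Definition sedge (p : Q12) (x y : option Sigma) (q : Q12) : bool :=
  match p, q with
  | inl p, inl q => tedge p x y q
  | inr p, inr q => tedge p x y q
  | inl p, inr q => [&& c, x == None, y == None, tfinal p & tinit q]
  | inr _, inl _ => false end.
Definition sinit (p : Q12) := match p with inl p => tinit p | inr q => ~~ c && tinit q end.
Definition sfinal (p : Q12) := match p with inl p => ~~ c && tfinal p | inr q => tfinal q end.
Lemma sinit_ne : exists q, sinit q.
Proof. case: (tinit_ne T1) => q Hq; by exists (inl q). Qed.
Definition sumT := @Transducer Sigma Q12 sedge sinit sfinal sinit_ne.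

Lemma sum_inr_path q (s : seq (step sumT)) : is_path (T:=sumT) (inr q) s ->
  exists s2, s = map (mstep (T1:=T2) (T2:=sumT) inr) s2 /\ is_path q s2.
Proof.
elim: s q => [|[[x y] t] s IH] q /=; first by exists [::].
case: t => // t /andP [H1 H2].
case: (IH _ H2) => s2 [-> H3]; exists ((x, y, t) :: s2); split=> //=.
by rewrite H1.
Qed.

Lemma sum_inl_path p (s : seq (step sumT)) : c = false -> is_path (T:=sumT) (inl p) s ->
  exists s1, s = map (mstep (T1:=T1) (T2:=sumT) inl) s1 /\ is_path p s1.
Proof.
move=> Hc; elim: s p => [|[[x y] t] s IH] p /=; first by exists [::].
case: t => t; last by rewrite Hc.
case/andP=> H1 H2.
case: (IH _ H2) => s1 [-> H3]; exists ((x, y, t) :: s1); split=> //=.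
by rewrite H1.
Qed.

Lemma sum_split p (s : seq (step sumT)) : c = true -> is_path (T:=sumT) (inl p) s ->
  sfinal (end_state (T:=sumT) (inl p) s) ->
  exists s1 q s2, [/\ s = map (mstep (T1:=T1) (T2:=sumT) inl) s1 ++
                         (None, None, inr q) :: map (mstep (T1:=T2) (T2:=sumT) inr) s2,
     is_path p s1, tfinal (end_state p s1), tinit q &
     is_path q s2 /\ tfinal (end_state q s2)].
Proof.
move=> Hc; elim: s p => [|[[x y] t] s IH] p.
  by rewrite /end_state /= Hc.
rewrite /= end_state_cons.
case: t => t.
- case/andP=> H1 H2 Hf.
  case: (IH _ H2 Hf) => s1 [q [s2 [E P1 F1 I2 [P2 F2]]]].
  exists ((x, y, t) :: s1), q, s2; split=> //=.
  + by rewrite E.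
  + by rewrite H1.
- case/andP=> /and5P [_ /eqP Hx /eqP Hy Hfp Hit] H2 Hf.
  case: (sum_inr_path H2) => s2 [E P2].
  exists [::], t, s2; split=> //=.
  + by rewrite E Hx Hy.
  + split=> //; move: Hf; by rewrite E end_state_map.
Qed.

Lemma sum_union u v : c = false ->
  (relT sumT u v <-> relT T1 u v \/ relT T2 u v).
Proof.
move=> Hc; split.
- case/relTE=> [[p|p] [s [H1 H2 H3 H4 H5]]].
  + left; case: (sum_inl_path Hc H1) => s1 [E P1].
    apply/relTE; exists p, s1; split=> //.
    * by move: H3; rewrite E end_state_map /= Hc.
    * by rewrite -H4 E in_label_map.
    * by rewrite -H5 E out_label_map.
  + right; case: (sum_inr_path H1) => s1 [E P1].
    apply/relTE; exists p, s1; split=> //.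
    * by move: H2; rewrite /= Hc.
    * by move: H3; rewrite E end_state_map /=.
    * by rewrite -H4 E in_label_map.
    * by rewrite -H5 E out_label_map.
- case=> H.
  + move: H; apply: (relT_map (T2:=sumT) (f := inl)) => //= p; by rewrite Hc.
  + move: H; apply: (relT_map (T2:=sumT) (f := inr)) => //= p; by rewrite Hc.
Qed.

Lemma sum_concat u v : c = true ->
  (relT sumT u v <-> rel_prod (relT T1) (relT T2) u v).
Proof.
move=> Hc; split.
- case/relTE=> [[p|p] [s [H1 H2 H3 H4 H5]]]; last by move: H2; rewrite /= Hc.
  case: (sum_split Hc H1 H3) => s1 [q [s2 [E P1 F1 I2 [P2 F2]]]].
  exists (in_label s1), (in_label s2), (out_label s1), (out_label s2); split; [|split; [|split]].
  + by rewrite -H4 E in_label_cat in_label_cons !in_label_map.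
  + by rewrite -H5 E out_label_cat out_label_cons !out_label_map.
  + apply/relTE; by exists p, s1.
  + apply/relTE; by exists q, s2.
- case=> u1 [u2 [v1 [v2 [-> [-> [/relTE [p [s1 [P1 I1 F1 <- <-]]]
                                 /relTE [q [s2 [P2 I2 F2 <- <-]]]]]]]]].
  apply/relTE; exists (inl p), (map (mstep (T1:=T1) (T2:=sumT) inl) s1 ++
                         (None, None, inr q) :: map (mstep (T1:=T2) (T2:=sumT) inr) s2).
  split.
  + rewrite is_path_cat (is_path_map (T2:=sumT)) //= end_state_map /=.
    rewrite Hc F1 I2 /=. exact: (is_path_map (T2:=sumT)).
  + by [].
  + by rewrite end_state_cat end_state_map end_state_cons end_state_map.
  + by rewrite in_label_cat in_label_cons !in_label_map.
  + by rewrite out_label_cat out_label_cons !out_label_map.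
Qed.

Lemma sum_good : c = false -> good T1 -> good T2 -> good sumT.
Proof.
move=> Hc [sg1 G1] [sg2 G2].
exists (fun q : Q12 => match q with inl q => sg1 q | inr q => sg2 q end).
move=> [p|p] x y [q|q] He.
- by case: (G1 _ _ _ _ He) => /= -> H.
- by move: He; rewrite /= Hc.
- by [].
- by case: (G2 _ _ _ _ He) => /= -> H.
Qed.

End Sum.

Definition mono (Sigma : finType) (b : bool) (T : transducer Sigma) :=
  forall p x y q, tedge (t:=T) p x y q -> stepok b (x, y, q).

Lemma mono_good (Sigma : finType) b (T : transducer Sigma) : mono b T -> good T.
Proof. move=> H; exists (fun _ => b) => p x y q He; split=> //; exact: H He. Qed.

Lemma sum_mono (Sigma : finType) b (T1 T2 : transducer Sigma) c :
  mono b T1 -> mono b T2 -> mono b (sumT T1 T2 c).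
Proof.
move=> M1 M2 [p|p] x y [q|q] //= He.
- exact: M1 He.
- case/and5P: He => _ /eqP -> /eqP -> _ _; by rewrite /stepok; case: (b).
- exact: M2 He.
Qed.

Section DFAT.
Variables (Sigma : finType) (M : dfa Sigma) (b : bool).
Definition lab (c : Sigma) : option Sigma * option Sigma :=
  if b then (Some c, None) else (None, Some c).
Definition dedge (p : dstate M) (x y : option Sigma) (q : dstate M) : bool :=
  [exists c, ((x, y) == lab c) && (q == dtrans p c)].
Definition dinit (p : dstate M) := p == dstart M.
Lemma dinit_ne : exists q, dinit q.
Proof. by exists (dstart M); rewrite /dinit. Qed.
Definition dfaT := @Transducer Sigma (dstate M) dedge dinit (@dfinal _ M) dinit_ne.

Lemma dfa_path p (s : seq (step dfaT)) : is_path (T:=dfaT) p s -> exists w,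
  [/\ in_label s = (if b then w else [::]), out_label s = (if b then [::] else w)
    & end_state p s = foldl (@dtrans _ M) p w].
Proof.
elim: s p => [|[[x y] q] s IH] p /=; first by exists [::]; case: (b).
case/andP=> /existsP [c /andP [/eqP Exy /eqP Eq]] H2.
case: (IH _ H2) => w [E1 E2 E3].
exists (c :: w); rewrite in_label_cons out_label_cons end_state_cons E1 E2 E3 Eq /=.
move: Exy; rewrite /lab; case: (b) => -[-> ->]; by split.
Qed.

Lemma dfa_build p w : exists s : seq (step dfaT), [/\ is_path (T:=dfaT) p s,
  in_label s = (if b then w else [::]), out_label s = (if b then [::] else w)
    & end_state p s = foldl (@dtrans _ M) p w].
Proof.
elim: w p => [|c w IH] p /=; first by exists [::]; case: (b).
case: (IH (dtrans p c)) => s [P1 E1 E2 E3].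
exists (((lab c).1, (lab c).2, dtrans p c) :: s).
rewrite /= P1 in_label_cons out_label_cons end_state_cons E1 E2 E3 andbT.
split=> //.
- apply/existsP; exists c; by rewrite -surjective_pairing !eqxx.
- rewrite /lab; by case: (b).
- rewrite /lab; by case: (b).
Qed.

Lemma dfa_realizes (A : seq Sigma -> Prop) : (forall w, A w <-> dfa_accepts M w) ->
  realizes dfaT (if b then left_only A else right_only A).
Proof.
move=> HA u v; split.
- have K : forall w, A w -> relT dfaT (if b then w else [::]) (if b then [::] else w).
    move=> w /HA Hw; case: (dfa_build (dstart M) w) => s [P1 E1 E2 E3].
    apply/relTE; exists (dstart M), s; split=> //.
    + by rewrite /= /dinit.
    + by rewrite /= E3.
  case: (b) K => K.
  + by case=> Hu ->; apply: K.
  + by case=> -> Hv; apply: K.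
- case/relTE=> p [s [P1 I1 F1 E1 E2]].
  case: (dfa_path P1) => w [W1 W2 W3].
  have Aw : A w.
    apply/HA; rewrite /dfa_accepts -(eqP I1) -W3; exact: F1.
  move: W1 W2; rewrite E1 E2; case: (b) => -> ->; by split.
Qed.

Lemma dfa_mono : mono b dfaT.
Proof.
move=> p x y q /existsP [c /andP [/eqP Exy _]].
move: Exy; rewrite /lab /stepok; case: (b) => -[-> ->] //.
Qed.
End DFAT.

Section Empty.
Variable Sigma : finType.
Definition eT := @Transducer Sigma unit (fun _ _ _ _ => false) (fun _ => true)
  (fun _ => false) (ex_intro _ tt is_true_true).
Lemma eT_rel u v : relT eT u v -> False.
Proof.
case/relTE=> p [s [P1 I1 F1 _ _]].
by case: s P1 F1 => [|[[x y] q] s].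
Qed.
Lemma eT_good : good eT.
Proof. by exists (fun _ => true). Qed.
End Empty.

Section Double.
Variables (Sigma : finType) (a : Sigma).
Definition dbedge (p : bool) (x y : option Sigma) (q : bool) : bool :=
  match p, q with
  | false, true => (x == Some a) && (y == Some a)
  | true, false => (x == Some a) && (y == None)
  | _, _ => false end.
Lemma dbinit_ne : exists q : bool, ~~ q. Proof. by exists false. Qed.
Definition dbT := @Transducer Sigma bool dbedge (fun q => ~~ q) (fun q => ~~ q) dbinit_ne.

Lemma db_path (p : bool) (s : seq (step dbT)) : is_path (T:=dbT) p s ->
  end_state (T:=dbT) p s = false -> exists i,
  in_label s = nseq (2 * i + p) a /\ out_label s = nseq i a.
Proof.
elim: s p => [|[[x y] q] s IH] p /=.
  by rewrite /end_state /= => _ ->; exists 0.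
rewrite end_state_cons => /andP [He H2] Hend.
case: (IH _ H2 Hend) => i [E1 E2].
rewrite in_label_cons out_label_cons E1 E2.
case: p q He {H2 Hend E1 E2} => -[] //= /andP [/eqP -> /eqP ->].
- by exists i; split=> //=; rewrite addn0 addn1.
- exists i.+1; split=> //=; congr (_ :: nseq _ _); lia.
Qed.

Fixpoint db_seq (i : nat) : seq (step dbT) :=
  if i is i'.+1 then (Some a, Some a, true) :: (Some a, None, false) :: db_seq i'
  else [::].

Lemma db_build i : [/\ is_path (T:=dbT) false (db_seq i), end_state (T:=dbT) false (db_seq i) = false,
  in_label (db_seq i) = nseq (2 * i) a & out_label (db_seq i) = nseq i a].
Proof.
elim: i => [|i [P1 E1 E2 E3]] //=.
rewrite P1 !in_label_cons !out_label_cons !end_state_cons E1 E2 E3 /=.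
split=> //; [by rewrite !eqxx | by have -> : (i + 1 * i.+1)%coq_nat = (2*i).+1 by lia].
Qed.

Lemma db_realizes : realizes dbT (double_rel a).
Proof.
move=> u v; split.
- case=> i [-> ->]; case: (db_build i) => P1 E1 E2 E3.
  apply/relTE; exists false, (db_seq i); split=> //; by rewrite E1.
- case/relTE=> p [s [P1 I1 F1 <- <-]].
  have Ee : end_state (T:=dbT) p s = false by move: F1; case: (end_state (T:=dbT) p s).
  case: (db_path P1 Ee) => i [E1 E2]; exists i.
  by move: E1 I1; case: (p) => // -> _; rewrite addn0.
Qed.

Lemma db_mono : mono true dbT.
Proof.
move=> [] x y [] //= /andP [/eqP -> /eqP ->] //.
Qed.
End Double.

Lemma l2l_sizes (Sigma : finType) (T : transducer Sigma) p (s : seq (step T)) :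
  letter_to_letter T -> is_path p s -> size (in_label s) = size (out_label s).
Proof.
move=> L; elim: s p => [|[[x y] q] s IH] p //= /andP [He H2].
rewrite in_label_cons out_label_cons !size_cat (IH _ H2).
case: (L _ _ _ _ He); by case: x y {He} => [x|] [y|].
Qed.

Lemma l2l_mono (Sigma : finType) (T : transducer Sigma) b :
  letter_to_letter T -> mono b T.
Proof.
move=> L p x y q He; case: (L _ _ _ _ He); rewrite /stepok.
by case: x y {He} => [x|] [y|] //; case: (b).
Qed.

Lemma l2l_rel_sizes (Sigma : finType) (S : wrel Sigma) : l2l_rel S ->
  forall u v, S u v -> size u = size v.
Proof.
case=> T [L R] u v /R /relTE [p [s [P1 _ _ <- <-]]]; exact: l2l_sizes P1.
Qed.

Section Main.
Variable Sigma : finType.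

Lemma realizes_eq (T : transducer Sigma) R R' : rel_eq R R' -> realizes T R' -> realizes T R.
Proof. move=> E H u v; rewrite E; exact: H. Qed.

Lemma realizes_rel_eq (T : transducer Sigma) R : realizes T R -> rel_eq R (relT T).
Proof. by []. Qed.

Lemma rel_prod_ext (R1 R2 R1' R2' : wrel Sigma) :
  rel_eq R1 R1' -> rel_eq R2 R2' -> rel_eq (rel_prod R1 R2) (rel_prod R1' R2').
Proof.
move=> E1 E2 u v; split; case=> u1 [u2 [v1 [v2 [-> [-> [H1 H2]]]]]];
  exists u1, u2, v1, v2; (split=> //; split=> //; split; [by apply/E1 | by apply/E2]).
Qed.

Lemma concat_ok (T1 T2 : transducer Sigma) R1 R2 b :
  realizes T1 R1 -> realizes T2 R2 -> mono b T1 -> mono b T2 ->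
  exists T, good T /\ realizes T (rel_prod R1 R2).
Proof.
move=> H1 H2 M1 M2; exists (sumT T1 T2 true); split.
- apply: (@mono_good _ b); exact: sum_mono.
- move=> u v; rewrite (sum_concat _ _ _ _ (erefl true)).
  exact: rel_prod_ext.
Qed.

Lemma left_piece_ok (R : wrel Sigma) : left_sync_piece R -> exists T, good T /\ realizes T R.
Proof.
case=> S [A [[TS [L RS]] [[M HA] [E|E]]]].
- case: (concat_ok RS (dfa_realizes true HA) (l2l_mono true L) (@dfa_mono _ M true))
    => T [G HT]; exists T; split=> //; exact: realizes_eq HT.
- case: (concat_ok RS (dfa_realizes false HA) (l2l_mono false L) (@dfa_mono _ M false))
    => T [G HT]; exists T; split=> //; exact: realizes_eq HT.
Qed.

Lemma right_piece_ok (R : wrel Sigma) : right_sync_piece R -> exists T, good T /\ realizes T R.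
Proof.
case=> S [A [[TS [L RS]] [[M HA] [E|E]]]].
- case: (concat_ok (dfa_realizes true HA) RS (@dfa_mono _ M true) (l2l_mono true L))
    => T [G HT]; exists T; split=> //; exact: realizes_eq HT.
- case: (concat_ok (dfa_realizes false HA) RS (@dfa_mono _ M false) (l2l_mono false L))
    => T [G HT]; exists T; split=> //; exact: realizes_eq HT.
Qed.

Lemma union_ok n (Rs : 'I_n -> wrel Sigma) :
  (forall i, exists T, good T /\ realizes T (Rs i)) ->
  exists T, good T /\ realizes T (fun u v => exists i, Rs i u v).
Proof.
elim: n Rs => [|n IH] Rs H.
  exists (eT Sigma); split; first exact: eT_good.
  move=> u v; split; first by case=> -[].
  by move/eT_rel.
case: (IH (fun i => Rs (lift ord0 i))) => [i|T' [G' R']]; first exact: H.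
case: (H ord0) => T0 [G0 R0].
exists (sumT T0 T' false); split; first exact: sum_good.
move=> u v; rewrite (sum_union _ _ _ _ (erefl false)) -R0 -R'; split.
- case=> i; case: (unliftP ord0 i) => [j ->|->] Hi; [right; by exists j | by left].
- case=> [Hi|[j Hj]]; by eexists; eauto.
Qed.

Variable a : Sigma.

Lemma double_size (u v : seq Sigma) : double_rel a u v -> size u = 2 * size v.
Proof. by case=> i [-> ->]; rewrite !size_nseq. Qed.

Lemma no_union n (Rs : 'I_n -> wrel Sigma) :
  (forall i u v u' v', Rs i u v -> Rs i u' v' -> size v = size v') ->
  ~ (forall u v, double_rel a u v <-> exists i, Rs i u v).
Proof.
move=> Hs Hu.
have H (N : 'I_n.+1) : exists i, Rs i (nseq (2 * N) a) (nseq N a).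
  by apply/Hu; exists N.
pose f N := proj1_sig (constructive_indefinite_description _ (H N)).
have Hf N : Rs (f N) (nseq (2 * N) a) (nseq N a).
  exact: (proj2_sig (constructive_indefinite_description _ (H N))).
have inj : injective f.
  move=> N N' E; apply/val_inj.
  have H2 := Hf N'; rewrite -E in H2.
  by have := Hs _ _ _ _ _ (Hf N) H2; rewrite !size_nseq.
by have := leq_card _ inj; rewrite !card_ord ltnn.
Qed.

Lemma left_piece_sizes (R : wrel Sigma) : (forall u v, R u v -> double_rel a u v) ->
  left_sync_piece R -> forall u v u' v', R u v -> R u' v' -> size v = size v'.
Proof.
move=> Hsub [S [A [LS [_ [E|E]]]]] u v u' v' H1 H2.
- have := H1; have := H2; move/E=> [x1 [x2 [y1 [y2 [Eu [Ev [Hs [Ha Hy]]]]]]]].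
  move/E=> [z1 [z2 [w1 [w2 [Eu' [Ev' [Hs' [Ha' Hw]]]]]]]].
  have Hc : R (z1 ++ x2) (w1 ++ [::]).
    apply/E; exists z1, x2, w1, [::]; by do !split.
  have := double_size (Hsub _ _ H1); have := double_size (Hsub _ _ H2).
  have := double_size (Hsub _ _ Hc).
  have := l2l_rel_sizes LS Hs; have := l2l_rel_sizes LS Hs'.
  subst; rewrite !size_cat /=; lia.
- have := H1; have := H2; move/E=> [x1 [x2 [y1 [y2 [Eu [Ev [Hs [Ha Hy]]]]]]]].
  move/E=> [z1 [z2 [w1 [w2 [Eu' [Ev' [Hs' [Ha' Hw]]]]]]]].
  have := double_size (Hsub _ _ H1); have := double_size (Hsub _ _ H2).
  have := l2l_rel_sizes LS Hs; have := l2l_rel_sizes LS Hs'.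
  subst; rewrite !size_cat /=; lia.
Qed.

Lemma right_piece_sizes (R : wrel Sigma) : (forall u v, R u v -> double_rel a u v) ->
  right_sync_piece R -> forall u v u' v', R u v -> R u' v' -> size v = size v'.
Proof.
move=> Hsub [S [A [LS [_ [E|E]]]]] u v u' v' H1 H2.
- have := H1; have := H2; move/E=> [x1 [x2 [y1 [y2 [Eu [Ev [[Ha Hy] Hs]]]]]]].
  move/E=> [z1 [z2 [w1 [w2 [Eu' [Ev' [[Ha' Hw] Hs']]]]]]].
  have Hc : R (z1 ++ x2) ([::] ++ y2).
    apply/E; exists z1, x2, [::], y2; by do !split.
  have := double_size (Hsub _ _ H1); have := double_size (Hsub _ _ H2).
  have := double_size (Hsub _ _ Hc).
  have := l2l_rel_sizes LS Hs; have := l2l_rel_sizes LS Hs'.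
  subst; rewrite !size_cat /=; lia.
- have := H1; have := H2; move/E=> [x1 [x2 [y1 [y2 [Eu [Ev [[Ha Hy] Hs]]]]]]].
  move/E=> [z1 [z2 [w1 [w2 [Eu' [Ev' [[Ha' Hw] Hs']]]]]]].
  have := double_size (Hsub _ _ H1); have := double_size (Hsub _ _ H2).
  have := l2l_rel_sizes LS Hs; have := l2l_rel_sizes LS Hs'.
  subst; rewrite !size_cat /=; lia.
Qed.

End Main.

Theorem proposition4 (Sigma : finType) (a : Sigma) :
  (forall R : wrel Sigma, left_synchronous R ->
     exists T : transducer Sigma, zero_avoiding T 0 /\ realizes T R) /\
  (forall R : wrel Sigma, right_synchronous R ->
     exists T : transducer Sigma, zero_avoiding T 0 /\ realizes T R) /\
  ((exists T : transducer Sigma, zero_avoiding T 0 /\ realizes T (double_rel a)) /\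
   ~ left_synchronous (double_rel a) /\ ~ right_synchronous (double_rel a)).
Proof.
split; [|split; [|split; [|split]]].
- move=> R [n [Rs [Hp HR]]].
  case: (@union_ok _ n Rs) => [i|T [G HT]]; first exact: left_piece_ok.
  exists T; split; first exact: good_za.
  move=> u v; rewrite HR; exact: HT.
- move=> R [n [Rs [Hp HR]]].
  case: (@union_ok _ n Rs) => [i|T [G HT]]; first exact: right_piece_ok.
  exists T; split; first exact: good_za.
  move=> u v; rewrite HR; exact: HT.
- exists (dbT a); split; last exact: db_realizes.
  apply: good_za; apply: mono_good; exact: db_mono.
- case=> n [Rs [Hp HR]]; apply: (no_union (Rs := Rs) _ HR) => i.
  apply: left_piece_sizes (Hp i) => u v H; apply/HR; by exists i.
- case=> n [Rs [Hp HR]]; apply: (no_union (Rs := Rs) _ HR) => i.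
  apply: right_piece_sizes (Hp i) => u v H; apply/HR; by exists i.
Qed.
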